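(* Let $p,q$ be positive integers with $p<q$. Then $$\sum_{n=1}^{\infty}\log\left(1+\frac{1}{n}\right)\cos\left(\frac{(2n+1)\pi p}{q}\right)=\log q\,\cos\left(\frac{\pi p}{q}\right)-2\sin\left(\frac{\pi p}{q}\right)\sum_{j=1}^{q-1}\log\Gamma\left(\frac{j}{q}\right)\sin\left(\frac{2\pi jp}{q}\right).$$
   Context: $\Gamma$ denotes the Euler gamma function. *)

(* Defs.v *)
From Stdlib Require Import Reals.
From Coquelicot Require Import Coquelicot.
Open Scope R_scope.

(* Euler Gamma function, via Euler's integral:
   Gamma x = int_0^oo t^(x-1) e^(-t) dt   (meaningful for x > 0). *)
Definition Gamma (x : R) : R :=
  RInt_gen (fun t => Rpower t (x - 1) * exp (- t))
           (at_right 0) (Rbar_locally p_infty).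

(* Main.v *)
Require Import Defs.
From Stdlib Require Import Reals Lra Lia.
From Coquelicot Require Import Coquelicot.
Open Scope R_scope.


Lemma exp_le' a b : a <= b -> exp a <= exp b.
Proof. intros [H|H]. left; apply exp_increasing; auto. subst; lra. Qed.

Lemma ball_R (l e x : R) : ball l e x <-> Rabs (x - l) < e.
Proof. unfold ball; simpl; unfold AbsRing_ball, abs, minus, plus, opp; simpl. tauto. Qed.

Definition Fi := filter_prod (at_right 0) (Rbar_locally p_infty).

Lemma Fi_intro (P : R * R -> Prop) d B : 0 < d ->
  (forall a b, 0 < a < d -> B < b -> P (a, b)) -> Fi P.
Proof.
  intros Hd H. apply Filter_prod with (Q := fun a => 0 < a < d) (R := fun b => B < b).
  - exists (mkposreal d Hd). intros y Hy Hp. simpl.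
    apply ball_R in Hy. apply Rabs_def2 in Hy. destruct Hy. unfold minus, plus, opp in *; simpl in *. lra.
  - exists B. auto.
  - intros; apply H; auto.
Qed.

Lemma Fi_elim (P : R * R -> Prop) : Fi P ->
  exists d, 0 < d /\ exists B, forall a b, 0 < a < d -> B < b -> P (a, b).
Proof.
  intros [Q R0 HQ HR H]. destruct HQ as [eps He]. destruct HR as [M HM].
  exists eps. split. apply cond_pos. exists M. intros a b Ha Hb. apply H.
  - apply He; [|lra]. apply ball_R. rewrite Rabs_right; lra.
  - apply HM; auto.
Qed.

Definition Fconv (h : R * R -> R) (l : R) :=
  forall eps, 0 < eps -> exists d, 0 < d /\ exists B,
    forall a b, 0 < a < d -> B < b -> Rabs (h (a, b) - l) < eps.

Lemma Fconv_filterlim h l : Fconv h l -> filterlim h Fi (locally l).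
Proof.
  intros H. apply filterlim_locally. intros eps.
  destruct (H eps (cond_pos eps)) as [d [Hd [B HB]]].
  apply (Fi_intro _ d B Hd). intros a b Ha Hb.
  apply ball_R. apply HB; auto.
Qed.

Lemma filterlim_Fconv h l : filterlim h Fi (locally l) -> Fconv h l.
Proof.
  intros H eps He. apply filterlim_locally with (eps := mkposreal eps He) in H.
  apply Fi_elim in H. destruct H as [d [Hd [B HB]]]. exists d; split; auto. exists B.
  intros a b Ha Hb. specialize (HB a b Ha Hb).
  apply ball_R in HB. exact HB.
Qed.

Lemma gen_of_Fconv f l : (forall a b, 0 < a -> 0 < b -> ex_RInt f a b) ->
  Fconv (fun ab => RInt f (fst ab) (snd ab)) l ->
  is_RInt_gen f (at_right 0) (Rbar_locally p_infty) l.
Proof.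
  intros Hex H. apply Fconv_filterlim in H.
  unfold is_RInt_gen, filterlimi, filter_le, filtermapi. intros P HP.
  specialize (H P HP). unfold filtermap in H.
  assert (H2 : Fi (fun ab => 0 < fst ab /\ 0 < snd ab)).
  { apply (Fi_intro _ 1 0); [lra|]. intros a b Ha Hb; simpl; lra. }
  generalize (filter_and _ _ H H2). apply filter_imp.
  intros [a b] [HP' [Ha Hb]]. simpl in *. exists (RInt f a b). split; auto.
  apply RInt_correct. apply Hex; auto.
Qed.

Lemma Fconv_of_gen f l : is_RInt_gen f (at_right 0) (Rbar_locally p_infty) l ->
  Fconv (fun ab => RInt f (fst ab) (snd ab)) l.
Proof.
  intros H. apply filterlim_Fconv. apply filterlim_locally. intros eps.
  unfold is_RInt_gen, filterlimi, filter_le, filtermapi in H.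
  specialize (H (ball l eps) (locally_ball l eps)).
  change (Fi (fun ab => exists y, is_RInt f (fst ab) (snd ab) y /\ ball l eps y)) in H.
  revert H. apply filter_imp. intros [a b] [y [Hy Hb]]. simpl in *.
  rewrite (is_RInt_unique _ _ _ _ Hy). auto.
Qed.

Lemma Fconv_le h1 h2 l1 l2 d B : Fconv h1 l1 -> Fconv h2 l2 -> 0 < d ->
  (forall a b, 0 < a < d -> B < b -> h1 (a, b) <= h2 (a, b)) -> l1 <= l2.
Proof.
  intros H1 H2 Hd H. destruct (Rle_or_lt l1 l2) as [|Hlt]; auto.
  exfalso. set (e := (l1 - l2) / 2).
  destruct (H1 e ltac:(unfold e; lra)) as [d1 [Hd1 [B1 HB1]]].
  destruct (H2 e ltac:(unfold e; lra)) as [d2 [Hd2 [B2 HB2]]].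
  set (a := Rmin d (Rmin d1 d2) / 2).
  assert (Ha : 0 < a).
  { unfold a.
    assert (0 < Rmin d (Rmin d1 d2)) by (apply Rmin_glb_lt; auto; apply Rmin_glb_lt; auto). lra. }
  assert (Hm1 : Rmin d (Rmin d1 d2) <= d) by apply Rmin_l.
  assert (Hm2 : Rmin d (Rmin d1 d2) <= d1) by (eapply Rle_trans; [apply Rmin_r|apply Rmin_l]).
  assert (Hm3 : Rmin d (Rmin d1 d2) <= d2) by (eapply Rle_trans; [apply Rmin_r|apply Rmin_r]).
  set (b := Rmax B (Rmax B1 B2) + 1).
  assert (Hb1 : B < b) by (unfold b; generalize (Rmax_l B (Rmax B1 B2)); lra).
  assert (Hb2 : B1 < b) by (unfold b; generalize (Rmax_r B (Rmax B1 B2)) (Rmax_l B1 B2); lra).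
  assert (Hb3 : B2 < b) by (unfold b; generalize (Rmax_r B (Rmax B1 B2)) (Rmax_r B1 B2); lra).
  specialize (HB1 a b ltac:(unfold a in *; lra) Hb2).
  specialize (HB2 a b ltac:(unfold a in *; lra) Hb3).
  specialize (H a b ltac:(unfold a in *; lra) Hb1).
  apply Rabs_def2 in HB1. apply Rabs_def2 in HB2. destruct HB1, HB2. unfold e in *. lra.
Qed.

Lemma Fconv_unique h l1 l2 : Fconv h l1 -> Fconv h l2 -> l1 = l2.
Proof.
  intros H1 H2. apply Rle_antisym; eapply Fconv_le; eauto; try exact Rlt_0_1;
  intros; apply Rle_refl. Unshelve. exact 0. exact 0.
Qed.

Lemma Fconv_const c : Fconv (fun _ => c) c.
Proof. intros e He. exists 1; split; [lra|]. exists 0. intros. rewrite Rminus_eq_0, Rabs_R0; auto. Qed.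

Lemma Fconv_plus h1 h2 l1 l2 : Fconv h1 l1 -> Fconv h2 l2 ->
  Fconv (fun ab => h1 ab + h2 ab) (l1 + l2).
Proof.
  intros H1 H2 e He.
  destruct (H1 (e/2) ltac:(lra)) as [d1 [Hd1 [B1 HB1]]].
  destruct (H2 (e/2) ltac:(lra)) as [d2 [Hd2 [B2 HB2]]].
  exists (Rmin d1 d2). split. apply Rmin_glb_lt; auto.
  exists (Rmax B1 B2). intros a b Ha Hb.
  assert (a < d1) by (generalize (Rmin_l d1 d2); lra).
  assert (a < d2) by (generalize (Rmin_r d1 d2); lra).
  assert (B1 < b) by (generalize (Rmax_l B1 B2); lra).
  assert (B2 < b) by (generalize (Rmax_r B1 B2); lra).
  specialize (HB1 a b ltac:(lra) ltac:(lra)). specialize (HB2 a b ltac:(lra) ltac:(lra)).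
  replace (h1 (a, b) + h2 (a, b) - (l1 + l2)) with ((h1 (a,b) - l1) + (h2 (a,b) - l2)) by ring.
  eapply Rle_lt_trans. apply Rabs_triang. lra.
Qed.

Lemma Fconv_scal c h l : Fconv h l -> Fconv (fun ab => c * h ab) (c * l).
Proof.
  intros H e He.
  assert (Hc : 0 < Rabs c + 1) by (generalize (Rabs_pos c); lra).
  destruct (H (e / (Rabs c + 1))) as [d [Hd [B HB]]].
  { apply Rdiv_lt_0_compat; auto. }
  exists d; split; auto. exists B. intros a b Ha Hb. specialize (HB a b Ha Hb).
  replace (c * h (a, b) - c * l) with (c * (h (a,b) - l)) by ring.
  rewrite Rabs_mult.
  apply Rle_lt_trans with ((Rabs c + 1) * Rabs (h (a, b) - l)).
  { apply Rmult_le_compat_r. apply Rabs_pos. lra. }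
  apply Rmult_lt_compat_l with (r := Rabs c + 1) in HB; auto.
  replace ((Rabs c + 1) * (e / (Rabs c + 1))) with e in HB by (field; lra). auto.
Qed.

Lemma Fconv_ext h1 h2 l d B : 0 < d ->
  (forall a b, 0 < a < d -> B < b -> h1 (a, b) = h2 (a, b)) -> Fconv h1 l -> Fconv h2 l.
Proof.
  intros Hd Heq H e He. destruct (H e He) as [d1 [Hd1 [B1 HB1]]].
  exists (Rmin d d1). split. apply Rmin_glb_lt; auto.
  exists (Rmax B B1). intros a b Ha Hb.
  assert (a < d) by (generalize (Rmin_l d d1); lra).
  assert (a < d1) by (generalize (Rmin_r d d1); lra).
  assert (B < b) by (generalize (Rmax_l B B1); lra).
  assert (B1 < b) by (generalize (Rmax_r B B1); lra).
  rewrite <- Heq by lra. apply HB1; lra.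
Qed.


Definition fG (x t : R) := exp ((x - 1) * ln t - t).

Lemma fG_pos x t : 0 < fG x t.
Proof. apply exp_pos. Qed.

Lemma fG_cont x t : 0 < t -> continuous (fG x) t.
Proof. intros Ht. apply (ex_derive_continuous (fG x)). unfold fG. auto_derive. auto. Qed.

Lemma fG_ex x a b : 0 < a -> 0 < b -> ex_RInt (fG x) a b.
Proof.
  intros Ha Hb. apply (ex_RInt_continuous (V:=R_CompleteNormedModule)). intros z Hz. apply fG_cont.
  assert (0 < Rmin a b) by (apply Rmin_glb_lt; auto). lra.
Qed.

Lemma small_int x u v : 0 < x -> 0 < u -> 0 < v ->
  is_RInt (fun t => exp ((x - 1) * ln t)) u v (exp (x * ln v) / x - exp (x * ln u) / x).
Proof.
  intros Hx Hu Hv.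
  assert (Hm : 0 < Rmin u v) by (apply Rmin_glb_lt; auto).
  apply (is_RInt_derive (V:=R_CompleteNormedModule) (fun t => exp (x * ln t) / x)).
  - intros t Ht. assert (0 < t) by lra.
    auto_derive. auto.
    replace ((x - 1) * ln t) with (x * ln t + - ln t) by ring.
    rewrite exp_plus, exp_Ropp, exp_ln by auto. field. split; lra.
  - intros t Ht. apply (ex_derive_continuous (fun t => exp ((x - 1) * ln t))). auto_derive. lra.
Qed.

Lemma large_int K u v :
  is_RInt (fun t => K * exp (- t / 2)) u v (2 * K * exp (- u / 2) - 2 * K * exp (- v / 2)).
Proof.
  assert (Hi : is_RInt (fun t => K * exp (- t / 2)) u v
     (minus ((fun t => - 2 * K * exp (- t / 2)) v) ((fun t => - 2 * K * exp (- t / 2)) u))).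
  { apply (is_RInt_derive (V:=R_CompleteNormedModule) (fun t => - 2 * K * exp (- t / 2))).
    - intros t Ht. auto_derive. auto. unfold Rdiv. field.
    - intros t0 Ht. apply (ex_derive_continuous (fun t => K * exp (- t / 2))). auto_derive. auto. }
  unfold minus, plus, opp in Hi; simpl in Hi.
  replace (2 * K * exp (- u / 2) - 2 * K * exp (- v / 2))
    with (- 2 * K * exp (- v / 2) + - (- 2 * K * exp (- u / 2))) by ring.
  exact Hi.
Qed.

Lemma fG_small x t : 0 < t <= 1 -> fG x t <= exp ((x - 1) * ln t).
Proof. intros Ht. unfold fG. apply exp_le'. lra. Qed.

Definition mx (x : R) := Rmax (x - 1) 1.
Definition Kx (x : R) := exp (mx x * ln (2 * mx x) - mx x).

Lemma ln_le_sub1 s : 0 < s -> ln s <= s - 1.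
Proof. intros Hs. generalize (exp_ineq1_le (ln s)). rewrite exp_ln by auto. lra. Qed.

Lemma fG_large x t : 1 <= t -> fG x t <= Kx x * exp (- t / 2).
Proof.
  intros Ht. unfold fG, Kx. rewrite <- exp_plus. apply exp_le'.
  assert (Hm1 : 1 <= mx x) by apply Rmax_r.
  assert (Hm2 : x - 1 <= mx x) by apply Rmax_l.
  assert (Hl : 0 <= ln t) by (rewrite <- ln_1; apply ln_le; lra).
  assert (H1 : (x - 1) * ln t <= mx x * ln t) by (apply Rmult_le_compat_r; auto).
  assert (H2 : ln (t / (2 * mx x)) <= t / (2 * mx x) - 1).
  { apply ln_le_sub1. apply Rdiv_lt_0_compat; lra. }
  rewrite ln_div in H2 by lra.
  assert (H3 : mx x * (ln t - ln (2 * mx x)) <= mx x * (t / (2 * mx x) - 1))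
    by (apply Rmult_le_compat_l; lra).
  replace (mx x * (t / (2 * mx x) - 1)) with (t / 2 - mx x) in H3 by (field; lra).
  nra.
Qed.

Lemma RInt_small_bound x u v : 0 < x -> 0 < u -> u <= v -> v <= 1 ->
  0 <= RInt (fG x) u v <= exp (x * ln v) / x.
Proof.
  intros Hx Hu Huv Hv. split.
  - apply RInt_ge_0; auto. apply fG_ex; lra. intros; left; apply fG_pos.
  - apply Rle_trans with (RInt (fun t => exp ((x - 1) * ln t)) u v).
    + apply RInt_le; auto. apply fG_ex; lra.
      eexists; apply small_int; lra.
      intros t Ht. apply fG_small. lra.
    + rewrite (is_RInt_unique _ _ _ _ (small_int x u v Hx Hu ltac:(lra))).
      assert (0 < exp (x * ln u) / x) by (apply Rdiv_lt_0_compat; auto; apply exp_pos). lra.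
Qed.

Lemma RInt_large_bound x u v : 1 <= u -> u <= v ->
  0 <= RInt (fG x) u v <= 2 * Kx x * exp (- u / 2).
Proof.
  intros Hu Huv. split.
  - apply RInt_ge_0; auto. apply fG_ex; lra. intros; left; apply fG_pos.
  - apply Rle_trans with (RInt (fun t => Kx x * exp (- t / 2)) u v).
    + apply RInt_le; auto. apply fG_ex; lra.
      eexists; apply large_int.
      intros t Ht. apply fG_large. lra.
    + rewrite (is_RInt_unique _ _ _ _ (large_int (Kx x) u v)).
      assert (0 < 2 * Kx x * exp (- v / 2)).
      { unfold Kx. generalize (exp_pos (mx x * ln (2 * mx x) - mx x)) (exp_pos (- v / 2)). nra. }
      lra.
Qed.

Lemma RInt_swap_abs f a b : ex_RInt f a b -> Rabs (RInt f a b) = Rabs (RInt f b a).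
Proof.
  intros H. rewrite <- (opp_RInt_swap f a b H). unfold opp; simpl. symmetry; apply Rabs_Ropp.
Qed.

Lemma small_abs x d a a' : 0 < x -> 0 < a < d -> 0 < a' < d -> d <= 1 ->
  Rabs (RInt (fG x) a a') <= exp (x * ln d) / x.
Proof.
  intros Hx Ha Ha' Hd.
  assert (Hmono : forall v, 0 < v <= d -> exp (x * ln v) / x <= exp (x * ln d) / x).
  { intros v Hv. unfold Rdiv. apply Rmult_le_compat_r. left; apply Rinv_0_lt_compat; auto.
    apply exp_le'. apply Rmult_le_compat_l. lra. apply ln_le; lra. }
  destruct (Rle_or_lt a a') as [H|H].
  - destruct (RInt_small_bound x a a' Hx ltac:(lra) H ltac:(lra)).
    rewrite Rabs_right by lra. eapply Rle_trans; eauto. apply Hmono; lra.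
  - rewrite RInt_swap_abs by (apply fG_ex; lra).
    destruct (RInt_small_bound x a' a Hx ltac:(lra) ltac:(lra) ltac:(lra)).
    rewrite Rabs_right by lra. eapply Rle_trans; eauto. apply Hmono; lra.
Qed.

Lemma large_abs x B b b' : 1 <= B -> B < b -> B < b' ->
  Rabs (RInt (fG x) b b') <= 2 * Kx x * exp (- B / 2).
Proof.
  intros HB Hb Hb'.
  assert (Hmono : forall u, B <= u -> 2 * Kx x * exp (- u / 2) <= 2 * Kx x * exp (- B / 2)).
  { intros u Hu. apply Rmult_le_compat_l. unfold Kx. generalize (exp_pos (mx x * ln (2 * mx x) - mx x)). lra.
    apply exp_le'. lra. }
  destruct (Rle_or_lt b b') as [H|H].
  - destruct (RInt_large_bound x b b' ltac:(lra) H).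
    rewrite Rabs_right by lra. eapply Rle_trans; eauto. apply Hmono; lra.
  - rewrite RInt_swap_abs by (apply fG_ex; lra).
    destruct (RInt_large_bound x b' b ltac:(lra) ltac:(lra)).
    rewrite Rabs_right by lra. eapply Rle_trans; eauto. apply Hmono; lra.
Qed.

Lemma d_spec x e : 0 < x -> 0 < e -> exists d, 0 < d /\ d <= 1 /\
  forall v, 0 < v -> v <= d -> exp (x * ln v) <= e.
Proof.
  intros Hx He. exists (Rmin 1 (exp (ln e / x))).
  assert (Hp : 0 < Rmin 1 (exp (ln e / x))) by (apply Rmin_glb_lt; [lra| apply exp_pos]).
  split; auto. split. apply Rmin_l.
  intros v Hv Hvd.
  assert (Hl : ln v <= ln e / x).
  { replace (ln e / x) with (ln (exp (ln e / x))) by apply ln_exp.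
    apply ln_le; auto. eapply Rle_trans; eauto. apply Rmin_r. }
  apply Rle_trans with (exp (ln e)); [|rewrite exp_ln; lra].
  apply exp_le'. apply Rmult_le_compat_l with (r := x) in Hl; [|lra].
  replace (x * (ln e / x)) with (ln e) in Hl by (field; lra). lra.
Qed.

Lemma B_spec K e : 0 < K -> 0 < e -> exists B, 1 <= B /\
  forall u, B <= u -> K * exp (- u / 2) <= e.
Proof.
  intros HK He. exists (Rmax 1 (- 2 * ln (e / K))). split. apply Rmax_l.
  intros u Hu. generalize (Rmax_r 1 (- 2 * ln (e / K))). intros Hr.
  assert (H1 : exp (- u / 2) <= e / K).
  { replace (e / K) with (exp (ln (e / K))) by (apply exp_ln; apply Rdiv_lt_0_compat; auto).
    apply exp_le'. lra. }
  apply Rmult_le_compat_l with (r := K) in H1; [|lra].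
  replace (K * (e / K)) with e in H1 by (field; lra). auto.
Qed.

Lemma Kx_pos x : 0 < Kx x.
Proof. apply exp_pos. Qed.

Lemma Gamma_exists x : 0 < x ->
  exists l, is_RInt_gen (fG x) (at_right 0) (Rbar_locally p_infty) l.
Proof.
  intros Hx.
  assert (Hc : exists l, filterlim (fun ab => RInt (fG x) (fst ab) (snd ab)) Fi (locally l)).
  { apply (filterlim_locally_cauchy (U := R_CompleteSpace)).
    intros eps.
      destruct (d_spec x (x * (eps / 4)) Hx) as [d [Hd [Hd1 Hdv]]].
      { generalize (cond_pos eps); intros; nra. }
      destruct (B_spec (2 * Kx x) (eps / 4)) as [B [HB1 HBu]].
      { generalize (Kx_pos x); lra. } { generalize (cond_pos eps); lra. }
      exists (fun ab => 0 < fst ab < d /\ B < snd ab). split.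
      + apply (Fi_intro _ d B Hd). intros a b Ha Hb; simpl; auto.
      + intros [a b] [a' b'] [Ha Hb] [Ha' Hb']. simpl in *.
        apply ball_R.
        assert (Hch : RInt (fG x) a' b' - RInt (fG x) a b = RInt (fG x) a' a + RInt (fG x) b b').
        { rewrite <- (RInt_Chasles (fG x) a' a b') by (apply fG_ex; lra).
          rewrite <- (RInt_Chasles (fG x) a b b') by (apply fG_ex; lra).
          unfold plus; simpl. ring. }
        rewrite Hch. eapply Rle_lt_trans. apply Rabs_triang.
        assert (H1 := small_abs x d a' a Hx ltac:(lra) ltac:(lra) Hd1).
        assert (H2 := large_abs x B b b' HB1 ltac:(lra) ltac:(lra)).
        assert (H3 := Hdv d Hd (Rle_refl _)).
        assert (H4 := HBu B (Rle_refl _)).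
        assert (H5 : exp (x * ln d) / x <= eps / 4).
        { unfold Rdiv at 1. apply Rmult_le_reg_l with x; auto.
          replace (x * (exp (x * ln d) * / x)) with (exp (x * ln d)) by (field; lra). lra. }
        generalize (cond_pos eps). lra. }
  destruct Hc as [l Hl]. exists l. apply gen_of_Fconv.
  - intros; apply fG_ex; auto.
  - apply filterlim_Fconv; auto.
Qed.


Lemma RInt_lin (f g : R -> R) c1 c2 a b : ex_RInt f a b -> ex_RInt g a b ->
  RInt (fun s => c1 * f s + c2 * g s) a b = c1 * RInt f a b + c2 * RInt g a b.
Proof.
  intros Hf Hg.
  assert (I1 := RInt_correct (V:=R_CompleteNormedModule) f a b Hf).
  assert (I2 := RInt_correct (V:=R_CompleteNormedModule) g a b Hg).
  assert (I3 := is_RInt_plus _ _ _ _ _ _ (is_RInt_scal _ _ _ c1 _ I1) (is_RInt_scal _ _ _ c2 _ I2)).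
  assert (U1 := is_RInt_unique _ _ _ _ I3).
  transitivity (RInt (fun y => plus (scal c1 (f y)) (scal c2 (g y))) a b).
  apply (RInt_ext (V:=R_CompleteNormedModule)). intros t _. reflexivity.
  exact U1.
Qed.

Lemma Gamma_is x : 0 < x ->
  is_RInt_gen (fG x) (at_right 0) (Rbar_locally p_infty) (Gamma x).
Proof.
  intros Hx. destruct (Gamma_exists x Hx) as [l Hl].
  assert (H2 : is_RInt_gen (fun t => Rpower t (x - 1) * exp (- t))
                 (at_right 0) (Rbar_locally p_infty) l).
  { apply (is_RInt_gen_ext (fG x)); [|exact Hl].
    apply (Fi_intro _ 1 0). lra. intros a b Ha Hb t Ht. simpl in Ht.
    assert (0 < Rmin a b) by (apply Rmin_glb_lt; lra).
    unfold fG, Rpower. rewrite <- exp_plus. f_equal; try ring. }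
  unfold Gamma. rewrite (is_RInt_gen_unique _ l H2). auto.
Qed.

Lemma GammaF x : 0 < x -> Fconv (fun ab => RInt (fG x) (fst ab) (snd ab)) (Gamma x).
Proof. intros Hx. apply Fconv_of_gen. apply Gamma_is; auto. Qed.

Lemma Gamma_pos x : 0 < x -> 0 < Gamma x.
Proof.
  intros Hx.
  assert (Hc : 0 < RInt (fG x) 1 2).
  { apply RInt_gt_0. lra. intros; apply fG_pos. intros; apply fG_cont; lra. }
  apply Rlt_le_trans with (RInt (fG x) 1 2); auto.
  apply (Fconv_le (fun _ => RInt (fG x) 1 2) (fun ab => RInt (fG x) (fst ab) (snd ab)) _ _ 1 2).
  apply Fconv_const. apply GammaF; auto. lra.
  intros a b Ha Hb. simpl.
  rewrite <- (RInt_Chasles (fG x) a 1 b) by (apply fG_ex; lra).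
  rewrite <- (RInt_Chasles (fG x) 1 2 b) by (apply fG_ex; lra).
  unfold plus; simpl.
  assert (0 <= RInt (fG x) a 1).
  { apply RInt_ge_0. lra. apply fG_ex; lra. intros; left; apply fG_pos. }
  assert (0 <= RInt (fG x) 2 b).
  { apply RInt_ge_0. lra. apply fG_ex; lra. intros; left; apply fG_pos. }
  lra.
Qed.

Lemma boundary_lim x : 0 < x ->
  Fconv (fun ab => fG (x + 1) (snd ab) - fG (x + 1) (fst ab)) 0.
Proof.
  intros Hx e He.
  destruct (d_spec x (e / 2) Hx) as [d [Hd [Hd1 Hdv]]]. lra.
  destruct (B_spec (Kx (x + 1)) (e / 2)) as [B [HB1 HBu]].
  apply Kx_pos. lra.
  exists d; split; auto. exists B. intros a b Ha Hb. simpl.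
  assert (H1 : fG (x + 1) a <= e / 2).
  { eapply Rle_trans. apply fG_small. lra.
    replace (x + 1 - 1) with x by ring. apply Hdv; lra. }
  assert (H2 : fG (x + 1) b <= e / 2).
  { eapply Rle_trans. apply fG_large. lra. apply HBu. lra. }
  generalize (fG_pos (x + 1) a) (fG_pos (x + 1) b). intros.
  rewrite Rminus_0_r. apply Rabs_def1; lra.
Qed.

Lemma parts x a b : 0 < x -> 0 < a -> 0 < b ->
  RInt (fG (x + 1)) a b = x * RInt (fG x) a b - (fG (x + 1) b - fG (x + 1) a).
Proof.
  intros Hx Ha Hb.
  assert (Hm : 0 < Rmin a b) by (apply Rmin_glb_lt; auto).
  assert (Hi : is_RInt (fun t => x * fG x t - fG (x + 1) t) a b
                 (minus (fG (x + 1) b) (fG (x + 1) a))).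
  { apply (is_RInt_derive (V:=R_CompleteNormedModule) (fG (x + 1))).
    - intros t Ht. assert (0 < t) by lra. unfold fG. auto_derive. auto.
      assert (Hq : exp ((x - 1) * ln t - t) = exp ((x + 1 - 1) * ln t + - t) / t).
      { replace ((x - 1) * ln t - t) with (((x + 1 - 1) * ln t + - t) + - ln t) by ring.
        rewrite exp_plus, exp_Ropp, exp_ln by auto. reflexivity. }
      rewrite Hq. replace ((x + 1 - 1) * ln t - t) with ((x + 1 - 1) * ln t + - t) by ring.
      field. lra.
    - intros t0 Ht. assert (0 < t0) by lra.
      apply (ex_derive_continuous (fun t => x * fG x t - fG (x + 1) t)). unfold fG. auto_derive. lra. }
  assert (I1 := RInt_correct (V:=R_CompleteNormedModule) (fG x) a b ltac:(apply fG_ex; auto)).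
  assert (I2 := RInt_correct (V:=R_CompleteNormedModule) (fG (x + 1)) a b ltac:(apply fG_ex; auto)).
  assert (I3 := is_RInt_minus _ _ _ _ _ _ (is_RInt_scal _ _ _ x _ I1) I2).
  assert (U1 := is_RInt_unique _ _ _ _ I3).
  assert (U2 := is_RInt_unique _ _ _ _ Hi).
  assert (E : minus (scal x (RInt (fG x) a b)) (RInt (fG (x + 1)) a b) = minus (fG (x + 1) b) (fG (x + 1) a)).
  { transitivity (RInt (fun y => minus (scal x (fG x y)) (fG (x + 1) y)) a b).
    symmetry; exact U1.
    transitivity (RInt (fun t => x * fG x t - fG (x + 1) t) a b).
    apply (RInt_ext (V:=R_CompleteNormedModule)). intros t _. reflexivity.
    exact U2. }
  change (x * RInt (fG x) a b + - RInt (fG (x + 1)) a b = fG (x + 1) b + - fG (x + 1) a) in E.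
  lra.
Qed.

Lemma Gamma_succ x : 0 < x -> Gamma (x + 1) = x * Gamma x.
Proof.
  intros Hx. apply (Fconv_unique (fun ab => RInt (fG (x + 1)) (fst ab) (snd ab))).
  apply GammaF; lra.
  replace (x * Gamma x) with (x * Gamma x + (-1) * 0) by ring.
  apply (Fconv_ext (fun ab => x * RInt (fG x) (fst ab) (snd ab) +
                      (-1) * (fG (x + 1) (snd ab) - fG (x + 1) (fst ab))) _ _ 1 0).
  lra. intros a b Ha Hb. simpl. rewrite parts by lra. ring.
  apply Fconv_plus; apply Fconv_scal. apply GammaF; auto. apply boundary_lim; auto.
Qed.

Lemma exp_convex t a b : 0 <= t <= 1 -> exp (t * a + (1 - t) * b) <= t * exp a + (1 - t) * exp b.
Proof.
  intros Ht. set (m := t * a + (1 - t) * b).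
  assert (Ha : exp a >= exp m * (1 + (a - m))).
  { replace a with (m + (a - m)) at 1 by ring. rewrite exp_plus.
    generalize (exp_ineq1_le (a - m)) (exp_pos m). intros. nra. }
  assert (Hb : exp b >= exp m * (1 + (b - m))).
  { replace b with (m + (b - m)) at 1 by ring. rewrite exp_plus.
    generalize (exp_ineq1_le (b - m)) (exp_pos m). intros. nra. }
  assert (E : t * (exp m * (1 + (a - m))) + (1 - t) * (exp m * (1 + (b - m))) = exp m)
    by (unfold m; ring).
  nra.
Qed.

Lemma Gamma_logconvex x y t : 0 < x -> 0 < y -> 0 <= t <= 1 ->
  ln (Gamma (t * x + (1 - t) * y)) <= t * ln (Gamma x) + (1 - t) * ln (Gamma y).
Proof.
  intros Hx Hy Ht.
  set (z := t * x + (1 - t) * y).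
  assert (Hz : 0 < z) by (unfold z; nra).
  set (A := Gamma x). set (B := Gamma y).
  assert (HA : 0 < A) by (apply Gamma_pos; auto).
  assert (HB : 0 < B) by (apply Gamma_pos; auto).
  set (C := exp (t * ln A + (1 - t) * ln B)).
  set (g := fun s => C * (t / A * fG x s + (1 - t) / B * fG y s)).
  assert (Hpt : forall s, 0 < s -> fG z s <= g s).
  { intros s Hs. unfold g, C, fG.
    replace ((z - 1) * ln s - s) with
      (t * ((x - 1) * ln s - s - ln A) + (1 - t) * ((y - 1) * ln s - s - ln B)
       + (t * ln A + (1 - t) * ln B)) by (unfold z; ring).
    rewrite exp_plus, Rmult_comm. apply Rmult_le_compat_l. left; apply exp_pos.
    eapply Rle_trans. apply exp_convex; auto.
    assert (E1 : forall u L, 0 < L -> exp (u - ln L) = exp u / L).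
    { intros u L HL. unfold Rminus. rewrite exp_plus, exp_Ropp, exp_ln by auto. reflexivity. }
    rewrite !E1 by auto. right. field. lra. }
  assert (HgF : Fconv (fun ab => RInt g (fst ab) (snd ab)) C).
  { replace C with (C * (t / A * A + (1 - t) / B * B)) by (field; lra).
    apply (Fconv_ext (fun ab => C * (t / A * RInt (fG x) (fst ab) (snd ab)
                                     + (1 - t) / B * RInt (fG y) (fst ab) (snd ab))) _ _ 1 0).
    lra.
    intros a b Ha Hb. simpl. unfold g.
    transitivity (RInt (fun s => C * (t / A) * fG x s + C * ((1 - t) / B) * fG y s) a b).
    rewrite RInt_lin by (apply fG_ex; lra). ring.
    apply (RInt_ext (V:=R_CompleteNormedModule)). intros s _.
    change (C * (t / A) * fG x s + C * ((1 - t) / B) * fG y s = C * (t / A * fG x s + (1 - t) / B * fG y s)).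
    ring.
    apply Fconv_scal. apply Fconv_plus; apply Fconv_scal; apply GammaF; auto. }
  assert (Hle : Gamma z <= C).
  { apply (Fconv_le (fun ab => RInt (fG z) (fst ab) (snd ab)) (fun ab => RInt g (fst ab) (snd ab))
             _ _ 1 1 (GammaF z Hz) HgF ltac:(lra)).
    intros a b Ha Hb. simpl. apply RInt_le. lra. apply fG_ex; lra.
    apply (ex_RInt_continuous (V:=R_CompleteNormedModule)). intros s Hs. unfold g.
    assert (0 < Rmin a b) by (apply Rmin_glb_lt; lra). assert (0 < s) by lra.
    apply (ex_derive_continuous (fun s => C * (t / A * fG x s + (1 - t) / B * fG y s))).
    unfold fG. auto_derive. lra.
    intros s Hs. apply Hpt. lra. }
  unfold C in Hle. apply ln_le in Hle. rewrite ln_exp in Hle. exact Hle.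
  apply Gamma_pos; auto.
Qed.


Fixpoint sm (f : nat -> R) (k : nat) : R :=
  match k with O => 0 | S k' => sm f k' + f k' end.

Lemma sm_ext f g k : (forall j, (j < k)%nat -> f j = g j) -> sm f k = sm g k.
Proof.
  induction k; simpl; intros H; auto. rewrite IHk by (intros; apply H; lia). rewrite H by lia. auto.
Qed.

Lemma sm_plus f g k : sm (fun j => f j + g j) k = sm f k + sm g k.
Proof. induction k; simpl; [ring|rewrite IHk; ring]. Qed.

Lemma sm_scal c f k : sm (fun j => c * f j) k = c * sm f k.
Proof. induction k; simpl; [ring|rewrite IHk; ring]. Qed.

Lemma sm_add f N k : sm f (N + k) = sm f N + sm (fun j => f (N + j)%nat) k.
Proof. induction k; simpl. rewrite Nat.add_0_r; ring. rewrite Nat.add_succ_r; simpl. rewrite IHk; ring. Qed.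

Lemma sm_bound f k b : (forall j, (j < k)%nat -> Rabs (f j) <= b) -> Rabs (sm f k) <= INR k * b.
Proof.
  induction k; cbn [sm]; intros H. rewrite Rabs_R0; simpl; lra.
  eapply Rle_trans. apply Rabs_triang. rewrite S_INR.
  assert (Rabs (sm f k) <= INR k * b) by (apply IHk; intros; apply H; lia).
  assert (Rabs (f k) <= b) by (apply H; lia). lra.
Qed.

Lemma sm_abel (L c : nat -> R) k :
  sm (fun j => (L (S (S j)) - L (S j)) * c (S j)) k =
  L (S k) * c k - L 1%nat * c O + sm (fun j => (c j - c (S j)) * L (S j)) k.
Proof. induction k; simpl. ring. rewrite IHk. ring. Qed.

Lemma sm_weighted k (c : nat -> R) :
  sm (fun j => INR (S j) * (c j - c (S j))) k = sm c k - INR k * c k.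
Proof. induction k; cbn [sm]. simpl; ring. rewrite IHk. rewrite !S_INR. ring. Qed.

Lemma sm_telescope (u : nat -> R) k : sm (fun j => u j - u (S j)) k = u O - u k.
Proof. induction k; simpl. ring. rewrite IHk. ring. Qed.

Lemma sum_n_m_sm (g : nat -> R) k : sum_n_m g 1 k = sm (fun j => g (S j)) k.
Proof.
  induction k. rewrite sum_n_m_zero by lia. reflexivity.
  rewrite sum_n_Sm by lia. rewrite IHk. reflexivity.
Qed.

Section Trig.
Variables p q : nat.
Hypothesis hp : (0 < p)%nat.
Hypothesis hpq : (p < q)%nat.

Definition th := PI * INR p / INR q.
Definition cc (n : nat) := cos ((2 * INR n + 1) * th).
Definition ss (n : nat) := sin (2 * INR n * th).

Lemma q_pos : 0 < INR q.
Proof. apply lt_0_INR. lia. Qed.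

Lemma th_q : INR q * th = PI * INR p.
Proof. unfold th. field. generalize q_pos; lra. Qed.

Lemma sin_th_pos : 0 < sin th.
Proof.
  apply sin_gt_0.
  - unfold th. apply Rdiv_lt_0_compat. apply Rmult_lt_0_compat. apply PI_RGT_0.
    apply lt_0_INR; lia. apply q_pos.
  - unfold th. apply Rmult_lt_reg_r with (INR q). apply q_pos.
    replace (PI * INR p / INR q * INR q) with (PI * INR p) by (field; generalize q_pos; lra).
    apply Rmult_lt_compat_l. apply PI_RGT_0. apply lt_INR; lia.
Qed.

Lemma cc_diff n : cc n - cc (S n) = 2 * sin th * ss (S n).
Proof.
  unfold cc, ss. rewrite S_INR.
  replace ((2 * INR n + 1) * th) with (2 * (INR n + 1) * th - th) by ring.
  replace ((2 * (INR n + 1) + 1) * th) with (2 * (INR n + 1) * th + th) by ring.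
  rewrite cos_minus, cos_plus. ring.
Qed.

Lemma ss_diff n : ss (S n) - ss n = 2 * sin th * cc n.
Proof.
  unfold cc, ss. rewrite S_INR.
  replace (2 * (INR n + 1) * th) with ((2 * INR n + 1) * th + th) by ring.
  replace (2 * INR n * th) with ((2 * INR n + 1) * th - th) by ring.
  rewrite sin_minus, sin_plus. ring.
Qed.

Lemma cc_per n : cc (n + q) = cc n.
Proof.
  unfold cc. rewrite plus_INR.
  replace ((2 * (INR n + INR q) + 1) * th) with ((2 * INR n + 1) * th + 2 * INR p * PI).
  apply cos_period. generalize th_q; intro Hq. nra.
Qed.

Lemma ss_per n : ss (n + q) = ss n.
Proof.
  unfold ss. rewrite plus_INR.
  replace (2 * (INR n + INR q) * th) with (2 * INR n * th + 2 * INR p * PI).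
  apply sin_period. generalize th_q; intro Hq. nra.
Qed.

Lemma cc_perM n M : cc (n + M * q) = cc n.
Proof.
  induction M. simpl. rewrite Nat.add_0_r. auto.
  replace (n + S M * q)%nat with (n + M * q + q)%nat by (simpl; lia). rewrite cc_per. auto.
Qed.

Lemma ss_q : ss q = 0.
Proof.
  replace q with (0 + q)%nat by lia. rewrite ss_per. unfold ss. simpl. rewrite Rmult_0_r, Rmult_0_l. apply sin_0.
Qed.

Lemma cc_q : cc q = cc O.
Proof. replace q with (0 + q)%nat at 1 by lia. apply cc_per. Qed.

Lemma sum_ss : sm (fun j => ss (S j)) q = 0.
Proof.
  assert (H : 2 * sin th * sm (fun j => ss (S j)) q = 0).
  { rewrite <- sm_scal.
    rewrite (sm_ext _ (fun j => cc j - cc (S j))) by (intros; rewrite cc_diff; auto).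
    rewrite sm_telescope. rewrite cc_q. ring. }
  generalize sin_th_pos. intros. apply Rmult_integral in H. destruct H; auto. lra.
Qed.

Lemma sum_cc : sm cc q = 0.
Proof.
  assert (H : 2 * sin th * sm cc q = 0).
  { rewrite <- sm_scal.
    rewrite (sm_ext _ (fun j => - (ss j - ss (S j)))) by (intros; rewrite <- ss_diff; ring).
    rewrite (sm_ext _ (fun j => (-1) * (ss j - ss (S j)))) by (intros; ring).
    rewrite sm_scal, sm_telescope. rewrite ss_q. unfold ss. simpl.
    rewrite Rmult_0_r, Rmult_0_l, sin_0. ring. }
  generalize sin_th_pos. intros. apply Rmult_integral in H. destruct H; auto. lra.
Qed.

Lemma sum_wss : 2 * sin th * sm (fun j => INR (S j) / INR q * ss (S j)) q = - cc O.
Proof.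
  rewrite <- sm_scal.
  rewrite (sm_ext _ (fun j => / INR q * (INR (S j) * (cc j - cc (S j))))).
  2: { intros. rewrite cc_diff. field. generalize q_pos; lra. }
  rewrite sm_scal, sm_weighted, sum_cc, cc_q. field. generalize q_pos; lra.
Qed.

End Trig.


Lemma lnG_succ x : 0 < x -> ln (Gamma (x + 1)) = ln x + ln (Gamma x).
Proof. intros Hx. rewrite Gamma_succ by auto. apply ln_mult; auto. apply Gamma_pos; auto. Qed.

Lemma ln1p_le y : 0 <= y -> 0 <= ln (1 + y) <= y.
Proof.
  intros Hy. split. rewrite <- ln_1. apply ln_le; lra.
  generalize (ln_le_sub1 (1 + y) ltac:(lra)). lra.
Qed.

Lemma E_bound m a : 1 <= m -> 0 < a <= 1 ->
  Rabs (ln (Gamma (m + a)) - ln (Gamma m) - a * ln m) <= / m.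
Proof.
  intros Hm Ha.
  assert (Hup := Gamma_logconvex m (m + 1) (1 - a) ltac:(lra) ltac:(lra) ltac:(lra)).
  replace ((1 - a) * m + (1 - (1 - a)) * (m + 1)) with (m + a) in Hup by ring.
  rewrite lnG_succ in Hup by lra.
  assert (Hlo := Gamma_logconvex (m + a) (m + a + 1) a ltac:(lra) ltac:(lra) ltac:(lra)).
  replace (a * (m + a) + (1 - a) * (m + a + 1)) with (m + 1) in Hlo by ring.
  rewrite !lnG_succ in Hlo by lra.
  assert (Hl : ln (m + a) - ln m <= a / m).
  { rewrite <- ln_div by lra. replace ((m + a) / m) with (1 + a / m) by (field; lra).
    apply ln1p_le. apply Rdiv_le_0_compat; lra. }
  assert (Hl0 : 0 <= ln (m + a) - ln m).
  { assert (ln m <= ln (m + a)) by (apply ln_le; lra). lra. }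
  assert (Hk : (1 - a) * (ln (m + a) - ln m) <= / m).
  { apply Rle_trans with ((1 - a) * (a / m)). apply Rmult_le_compat_l; lra.
    unfold Rdiv. assert (0 < / m) by (apply Rinv_0_lt_compat; lra). nra. }
  apply Rabs_le. split; nra.
Qed.

Section Main.
Variables p q : nat.
Hypothesis hp : (0 < p)%nat.
Hypothesis hpq : (p < q)%nat.

Definition term (n : nat) := ln (1 + 1 / INR (S n)) * cc p q (S n).
Definition Ssum (N : nat) := sm term N.
Definition Pk (M j : nat) := sm (fun k => ln (INR (k * q + j))) M.

Lemma ln_step n : (0 < n)%nat -> ln (1 + 1 / INR n) = ln (INR (S n)) - ln (INR n).
Proof.
  intros Hn. assert (0 < INR n) by (apply lt_0_INR; auto).
  rewrite <- ln_div by (try apply lt_0_INR; lia).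
  f_equal. rewrite S_INR. field. lra.
Qed.

Lemma block M : Ssum (M * q) = ln (INR (M * q) + 1) * cc p q O
   + 2 * sin (th p q) * sm (fun j => ss p q (S j) * Pk M (S j)) q.
Proof.
  induction M.
  - simpl. unfold Ssum, Pk. simpl. rewrite Rplus_0_l, ln_1.
    rewrite (sm_ext _ (fun _ => 0 * 0)) by (intros; simpl; ring).
    rewrite sm_scal. ring.
  - replace (S M * q)%nat with (M * q + q)%nat by (simpl; lia).
    unfold Ssum. rewrite sm_add. fold (Ssum (M * q)). rewrite IHM.
    set (L := fun j => ln (INR (M * q + j))).
    rewrite (sm_ext (fun j => term (M * q + j)) (fun j => (L (S (S j)) - L (S j)) * cc p q (S j))).
    2: { intros j _. unfold term, L. rewrite ln_step by lia.
         replace (S (M * q + j)) with (M * q + S j)%nat by lia.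
         replace (S (M * q + S j)) with (M * q + S (S j))%nat by lia. f_equal.
         replace (M * q + S j)%nat with (S j + M * q)%nat by lia. apply cc_perM; auto. }
    rewrite sm_abel. rewrite (cc_q p q hp hpq).
    rewrite (sm_ext (fun j => (cc p q j - cc p q (S j)) * L (S j))
                    (fun j => 2 * sin (th p q) * (ss p q (S j) * L (S j))))
      by (intros; rewrite cc_diff; ring).
    rewrite sm_scal.
    rewrite (sm_ext (fun j => ss p q (S j) * Pk (S M) (S j))
                    (fun j => ss p q (S j) * Pk M (S j) + ss p q (S j) * L (S j)))
      by (intros; unfold Pk; cbn [sm]; unfold L; ring).
    rewrite sm_plus.
    assert (E1 : L (S q) = ln (INR (M * q + q) + 1)).
    { unfold L. f_equal. rewrite <- S_INR. f_equal. lia. }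
    assert (E2 : L 1%nat = ln (INR (M * q) + 1)).
    { unfold L. f_equal. rewrite <- S_INR. f_equal. lia. }
    rewrite E1, E2. ring.
Qed.

Lemma Pk_gamma M j : (0 < j)%nat ->
  Pk M j = INR M * ln (INR q) + ln (Gamma (INR M + INR j / INR q)) - ln (Gamma (INR j / INR q)).
Proof.
  intros Hj. assert (Hq := q_pos p q hp hpq).
  assert (Ha : 0 < INR j / INR q) by (apply Rdiv_lt_0_compat; auto; apply lt_0_INR; auto).
  induction M.
  - unfold Pk. simpl. rewrite Rplus_0_l. ring.
  - unfold Pk in *. cbn [sm]. rewrite IHM.
    assert (HM : 0 <= INR M) by apply pos_INR.
    replace (INR (M * q + j)) with (INR q * (INR M + INR j / INR q))
      by (rewrite plus_INR, mult_INR; field; lra).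
    rewrite ln_mult by lra.
    replace (INR (S M) + INR j / INR q) with ((INR M + INR j / INR q) + 1) by (rewrite S_INR; ring).
    rewrite lnG_succ by lra. rewrite S_INR. ring.
Qed.

Definition Tgt := ln (INR q) * cc p q O
   - 2 * sin (th p q) * sm (fun j => ss p q (S j) * ln (Gamma (INR (S j) / INR q))) q.

Lemma sm_four A B (u v w z : nat -> R) k :
  sm (fun j => A * u j + B * v j + w j - z j) k = A * sm u k + B * sm v k + sm w k - sm z k.
Proof. induction k; cbn [sm]. ring. rewrite IHk. ring. Qed.

Lemma main_bound M : (1 <= M)%nat ->
  Rabs (Ssum (M * q) - Tgt) <= (1 + 2 * INR q) / INR M.
Proof.
  intros HM. set (m := INR M).
  assert (Hm : 1 <= m) by (unfold m; replace 1 with (INR 1) by reflexivity; apply le_INR; auto).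
  assert (Hq := q_pos p q hp hpq).
  assert (Hq1 : 1 <= INR q) by (replace 1 with (INR 1) by reflexivity; apply le_INR; lia).
  set (a := fun j : nat => INR (S j) / INR q).
  set (E := fun j => ln (Gamma (m + a j)) - ln (Gamma m) - a j * ln m).
  rewrite block.
  rewrite (sm_ext (fun j => ss p q (S j) * Pk M (S j))
     (fun j => (m * ln (INR q) + ln (Gamma m)) * ss p q (S j) + ln m * (a j * ss p q (S j))
               + ss p q (S j) * E j - ss p q (S j) * ln (Gamma (a j)))).
  2: { intros j _. rewrite Pk_gamma by lia. unfold E, a, m. ring. }
  rewrite sm_four. rewrite (sum_ss p q hp hpq). unfold Tgt.
  set (Se := sm (fun j => ss p q (S j) * E j) q).
  set (Sg := sm (fun j => ss p q (S j) * ln (Gamma (a j))) q).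
  set (Sw := sm (fun j => a j * ss p q (S j)) q).
  assert (W : 2 * sin (th p q) * Sw = - cc p q 0) by (unfold Sw, a; apply sum_wss; auto).
  set (D := ln (INR (M * q) + 1) - ln m - ln (INR q)).
  assert (Hx : ln (INR (M * q) + 1) * cc p q 0 +
      2 * sin (th p q) * ((m * ln (INR q) + ln (Gamma m)) * 0 + ln m * Sw + Se - Sg) -
      (ln (INR q) * cc p q 0 - 2 * sin (th p q) * Sg)
      = cc p q 0 * D + 2 * sin (th p q) * Se).
  { replace (2 * sin (th p q) * ((m * ln (INR q) + ln (Gamma m)) * 0 + ln m * Sw + Se - Sg))
      with (ln m * (2 * sin (th p q) * Sw) + 2 * sin (th p q) * Se - 2 * sin (th p q) * Sg) by ring.
    rewrite W. unfold D. ring. }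
  replace (sm (fun j => ss p q (S j) * ln (Gamma (INR (S j) / INR q))) q) with Sg by reflexivity. rewrite Hx. clear Hx.
  assert (HD : 0 <= D <= / m).
  { unfold D. rewrite mult_INR. fold m.
    replace (ln (m * INR q + 1) - ln m - ln (INR q)) with (ln (1 + / (m * INR q))).
    2: { assert (0 < m * INR q + 1) by nra.
         rewrite <- (ln_div (m * INR q + 1) m) by lra.
         rewrite <- ln_div by (try apply Rdiv_lt_0_compat; lra).
         f_equal. field. lra. }
    destruct (ln1p_le (/ (m * INR q))) as [h1 h2].
    { left. apply Rinv_0_lt_compat. nra. }
    split; auto. eapply Rle_trans; [exact h2|].
    apply Rinv_le_contravar. lra. nra. }
  assert (HSe : Rabs Se <= INR q * / m).
  { apply sm_bound. intros j Hj. rewrite Rabs_mult.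
    assert (Hs : Rabs (ss p q (S j)) <= 1) by (unfold ss; apply Rabs_le; apply SIN_bound).
    assert (He : Rabs (E j) <= / m).
    { unfold E. apply E_bound; auto. unfold a. split.
      apply Rdiv_lt_0_compat; auto. apply lt_0_INR; lia.
      apply Rmult_le_reg_r with (INR q); auto. unfold Rdiv.
      rewrite Rmult_assoc, Rinv_l by lra. rewrite Rmult_1_r, Rmult_1_l. apply le_INR; lia. }
    assert (0 <= Rabs (E j)) by apply Rabs_pos.
    assert (0 <= Rabs (ss p q (S j))) by apply Rabs_pos.
    nra. }
  assert (Hc : Rabs (cc p q 0) <= 1) by (unfold cc; apply Rabs_le; apply COS_bound).
  assert (Hs : Rabs (sin (th p q)) <= 1) by (apply Rabs_le; apply SIN_bound).
  eapply Rle_trans. apply Rabs_triang. rewrite !Rabs_mult.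
  rewrite (Rabs_right 2) by lra. rewrite (Rabs_right D) by lra.
  assert (0 < / m) by (apply Rinv_0_lt_compat; lra).
  unfold Rdiv. fold m.
  assert (0 <= Rabs (cc p q 0)) by apply Rabs_pos.
  assert (0 <= Rabs (sin (th p q))) by apply Rabs_pos.
  assert (0 <= Rabs Se) by apply Rabs_pos.
  nra.
Qed.

End Main.


Section Fin.
Variables p q : nat.
Hypothesis hp : (0 < p)%nat.
Hypothesis hpq : (p < q)%nat.

Lemma tail_bound M r : (1 <= M)%nat -> (r <= q)%nat ->
  Rabs (Ssum p q (M * q + r) - Ssum p q (M * q)) <= / INR M.
Proof.
  intros HM Hr. unfold Ssum. rewrite sm_add.
  replace (sm (term p q) (M * q) + sm (fun j => term p q (M * q + j)) r - sm (term p q) (M * q))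
    with (sm (fun j => term p q (M * q + j)) r) by ring.
  assert (Hq := q_pos p q hp hpq).
  assert (Hm : 1 <= INR M) by (replace 1 with (INR 1) by reflexivity; apply le_INR; auto).
  eapply Rle_trans. apply (sm_bound _ _ (/ (INR M * INR q))).
  - intros j Hj. unfold term. rewrite Rabs_mult.
    assert (Hc : Rabs (cc p q (S (M * q + j))) <= 1) by (unfold cc; apply Rabs_le; apply COS_bound).
    assert (Hn : INR M * INR q + 1 <= INR (S (M * q + j))).
    { rewrite S_INR, plus_INR, mult_INR. generalize (pos_INR j). lra. }
    assert (Hpos : 0 < INR (S (M * q + j))) by nra.
    destruct (ln1p_le (1 / INR (S (M * q + j)))) as [h1 h2].
    { left. apply Rdiv_lt_0_compat; lra. }
    rewrite (Rabs_right (ln _)) by lra.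
    assert (h3 : 1 / INR (S (M * q + j)) <= / (INR M * INR q)).
    { unfold Rdiv. rewrite Rmult_1_l. apply Rinv_le_contravar. nra. lra. }
    assert (0 <= Rabs (cc p q (S (M * q + j)))) by apply Rabs_pos.
    nra.
  - assert (Hr' : INR r <= INR q) by (apply le_INR; auto).
    assert (0 < / (INR M * INR q)) by (apply Rinv_0_lt_compat; nra).
    apply Rle_trans with (INR q * / (INR M * INR q)). nra.
    right. field. lra.
Qed.

Lemma full_bound M r : (1 <= M)%nat -> (r < q)%nat ->
  Rabs (Ssum p q (M * q + r) - Tgt p q) <= (2 + 2 * INR q) / INR M.
Proof.
  intros HM Hr.
  assert (H1 := tail_bound M r HM ltac:(lia)).
  assert (H2 := main_bound p q hp hpq M HM).
  assert (Hm : 1 <= INR M) by (replace 1 with (INR 1) by reflexivity; apply le_INR; auto).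
  replace (Ssum p q (M * q + r) - Tgt p q) with
    ((Ssum p q (M * q + r) - Ssum p q (M * q)) + (Ssum p q (M * q) - Tgt p q)) by ring.
  eapply Rle_trans. apply Rabs_triang.
  replace ((2 + 2 * INR q) / INR M) with (/ INR M + (1 + 2 * INR q) / INR M) by (field; lra).
  lra.
Qed.

End Fin.

Theorem mainTheorem4 (p q : nat) (hp : (0 < p)%nat) (hpq : (p < q)%nat) :
  is_series
    (fun n : nat =>
       ln (1 + 1 / INR (n + 1))
       * cos ((2 * INR (n + 1) + 1) * PI * INR p / INR q))
    (ln (INR q) * cos (PI * INR p / INR q)
     - 2 * sin (PI * INR p / INR q)
       * sum_n_m (fun j : nat =>
                    ln (Gamma (INR j / INR q)) * sin (2 * PI * INR j * INR p / INR q))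
                 1 (q - 1)).
Proof.
  set (a := fun n : nat => ln (1 + 1 / INR (n + 1)) * cos ((2 * INR (n + 1) + 1) * PI * INR p / INR q)).
  assert (Ha : forall n, a n = term p q n).
  { intros n. unfold a, term, cc, th. rewrite Nat.add_1_r. f_equal. f_equal. unfold Rdiv; ring. }
  assert (Hs : forall n, sum_n a n = Ssum p q (S n)).
  { induction n. rewrite sum_O. unfold Ssum. cbn [sm]. rewrite Ha. symmetry. apply Rplus_0_l.
    rewrite sum_Sn, IHn. unfold Ssum. cbn [sm]. rewrite Ha. reflexivity. }
  assert (HT : ln (INR q) * cos (PI * INR p / INR q)
     - 2 * sin (PI * INR p / INR q)
       * sum_n_m (fun j : nat =>
                    ln (Gamma (INR j / INR q)) * sin (2 * PI * INR j * INR p / INR q))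
                 1 (q - 1) = Tgt p q).
  { unfold Tgt. rewrite sum_n_m_sm.
    assert (Hsplit : forall f, sm f q = sm f (q - 1) + f (q - 1)%nat).
    { intros f. replace q with (S (q - 1)) at 1 by lia. reflexivity. }
    rewrite Hsplit.
    assert (Z : ss p q (S (q - 1)) = 0).
    { replace (S (q - 1)) with q by lia. apply ss_q; auto. }
    rewrite Z.
    assert (C0 : cc p q 0 = cos (PI * INR p / INR q)).
    { unfold cc, th. f_equal. replace (INR 0) with 0 by reflexivity. ring. }
    rewrite C0. unfold th.
    rewrite (sm_ext (fun j => ln (Gamma (INR (S j) / INR q)) * sin (2 * PI * INR (S j) * INR p / INR q))
                    (fun j => ss p q (S j) * ln (Gamma (INR (S j) / INR q)))).
    ring.
    intros j _. unfold ss, th. rewrite Rmult_comm. f_equal. f_equal. unfold Rdiv; ring. }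
  fold a. rewrite HT.
  unfold is_series. apply filterlim_locally. intros eps.
  assert (Hq := q_pos p q hp hpq).
  assert (Hc : 0 < eps / (2 + 2 * INR q)) by (apply Rdiv_lt_0_compat; [apply cond_pos | lra]).
  destruct (archimed_cor1 _ Hc) as [K [HK HK0]].
  exists (K * q)%nat. intros n Hn. rewrite Hs. apply ball_R.
  assert (Hq0 : q <> 0%nat) by lia.
  set (M := (S n / q)%nat). set (r := (S n mod q)%nat).
  assert (Hdec : S n = (M * q + r)%nat) by (unfold M, r; rewrite (Nat.div_mod_eq (S n) q) at 1; lia).
  assert (HMK : (K <= M)%nat).
  { unfold M. apply Nat.div_le_lower_bound; auto. lia. }
  assert (Hr : (r < q)%nat) by (unfold r; apply Nat.mod_upper_bound; auto).
  rewrite Hdec. eapply Rle_lt_trans. apply full_bound; auto. lia.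
  assert (HKr : 0 < INR K) by (apply lt_0_INR; lia).
  assert (HKM : INR K <= INR M) by (apply le_INR; auto).
  assert (HiM : / INR M <= / INR K) by (apply Rinv_le_contravar; lra).
  unfold Rdiv. 
  apply Rmult_lt_compat_l with (r := 2 + 2 * INR q) in HK; [|lra].
  replace ((2 + 2 * INR q) * (eps / (2 + 2 * INR q))) with (pos eps) in HK by (field; lra).
  assert (0 < 2 + 2 * INR q) by lra. nra.
Qed.
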